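(* Let $s\ge1$ and $T\in\mathcal{T}(s)$. Then the tableau $D_{2,s}(T)$ satisfies conditions (C1)--(C5); i.e. $D_{2,s}(T)\in B(k\varpi_2)$ for some $0\le k\le s$.
   Context: Let $n\ge4$. Alphabet: $1<2<\dots<n-1<\{n,\bar n\}<\overline{n-1}<\dots<\bar2<\bar1$, a partial order in which $n$ and $\bar n$ are incomparable; set $\bar{\bar i}=i$. A tableau of shape $(k,k)$ is a sequence of $k$ columns, column $j$ with top entry $a_j$ and bottom entry $b_j$, written $\binom{a_1}{b_1}\cdots\binom{a_k}{b_k}$ ($\binom{x}{y}$ denotes a column, not a binomial coefficient). Conditions: (C1) $a_j\le a_{j+1}$ and $b_j\le b_{j+1}$ for all $j$; (C2) $b_j\not\le a_j$; (C3) no $j$ and letter $x$ with $a_j=a_{j+1}=x$, $b_{j+1}=\bar x$, and no $j,x$ with $a_j=x$, $b_j=b_{j+1}=\bar x$; (C4) no $j<j'$ with columns $j,j'$ equal to $\binom{n-1}{n},\binom{n}{\overline{n-1}}$ respectively, nor to $\binom{n-1}{\bar n},\binom{\bar n}{\overline{n-1}}$; (C5) no column $\binom{1}{\bar1}$. $B(k\varpi_2)$ = tableaux of shape $(k,k)$ satisfying (C1)--(C5) ($B(0)$ consists of the empty tableau); $\mathcal{T}(s)$ = tableaux of shape $(s,s)$ satisfying (C1),(C2),(C4). For $T\in\mathcal{T}(s)\setminus B(s\varpi_2)$ not equal to $\binom{1}{\bar1}\cdots\binom{1}{\bar1}$, there are a unique letter $a\in\{1,\dots,n,\bar n\}$ and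 $m\ge1$ such that $T$ contains consecutive columns of one of the forms (i) $\binom{a}{b_1}\binom{a}{\bar a}^m\binom{c_1}{d_1}$ with $b_1\ne\bar a$ and ($c_1\ne a$ or $d_1\ne\bar a$); (ii) $\binom{b_2}{c_2}\binom{a}{\bar a}^m\binom{d_2}{\bar a}$ with $d_2\neq a$ and ($b_2\ne a$ or $c_2\ne\bar a$); (iii) $\binom{b_3}{c_3}\binom{a}{\bar a}^{m+1}\binom{d_3}{e_3}$ with $b_3\ne a$, $e_3\ne\bar a$ (bounding columns may be absent at the ends of $T$); here $\binom{a}{\bar a}^m$ means $m$ consecutive columns $\binom{a}{\bar a}$. The drop map $D_{2,s}$ is: $D_{2,s}(\binom{1}{\bar1}\cdots\binom{1}{\bar1})$ is the empty tableau; $D_{2,s}(T)=T$ if $T\in B(s\varpi_2)$; otherwise $D_{2,s}(T)$ is obtained from $T$ by deleting $m$ of the columns $\binom{a}{\bar a}$ of this configuration (all $m$ in cases (i),(ii); $m$ of the $m+1$ in case (iii)). *)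

(* Defs.v *)
From mathcomp Require Import all_boot.
Set Implicit Arguments. Unset Strict Implicit. Unset Printing Implicit Defensive.

(* A letter of the type-D_n crystal alphabet is a pair (i, barred):
   (i, false) is the letter i, (i, true) is the letter \bar i, with 1 <= i <= n. *)
Definition letter := (nat * bool)%type.
Definition valid_letter (n : nat) (x : letter) : bool := (0 < x.1) && (x.1 <= n).
Definition barL (x : letter) : letter := (x.1, ~~ x.2).

(* position in the chain 1 < 2 < ... < n-1 < {n, nbar} < (n-1)bar < ... < 1bar *)
Definition rk (n : nat) (x : letter) : nat := if x.2 then (n.*2).+1 - x.1 else x.1.

(* the partial order: n and \bar n are incomparable *)
Definition leL (n : nat) (x y : letter) : bool :=
  (x == y) || ((rk n x < rk n y) && ~~ ((x.1 == n) && (y.1 == n))).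

(* a column (top, bottom); a tableau of shape (k,k) = list of its k columns *)
Definition column := (letter * letter)%type.
Definition tableau := seq column.

Definition valid_tab (n : nat) (T : tableau) : Prop :=
  all (fun c => valid_letter n c.1 && valid_letter n c.2) T.

Definition C1 (n : nat) (T : tableau) : Prop :=
  sorted (fun c d : column => leL n c.1 d.1 && leL n c.2 d.2) T.

Definition C2 (n : nat) (T : tableau) : Prop :=
  all (fun c : column => ~~ leL n c.2 c.1) T.

Definition C3 (T : tableau) : Prop :=
  all (fun p : column * column =>
         ~~ ((p.1.1 == p.2.1) && (p.2.2 == barL p.1.1)) &&
         ~~ ((p.1.2 == p.2.2) && (p.1.2 == barL p.1.1)))
      (zip T (behead T)).

Definition dflt_col : column := ((0, false), (0, false)).

Definition C4 (n : nat) (T : tableau) : Prop :=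
  forall j j', j < j' < size T ->
    ~ (nth dflt_col T j = ((n.-1, false), (n, false)) /\
       nth dflt_col T j' = ((n, false), (n.-1, true))) /\
    ~ (nth dflt_col T j = ((n.-1, false), (n, true)) /\
       nth dflt_col T j' = ((n, true), (n.-1, true))).

Definition col11 : column := ((1, false), (1, true)).

Definition C5 (T : tableau) : Prop := all (fun c => c != col11) T.

Definition inB (n k : nat) (T : tableau) : Prop :=
  size T = k /\ valid_tab n T /\ C1 n T /\ C2 n T /\ C3 T /\ C4 n T /\ C5 T.

Definition inTcal (n s : nat) (T : tableau) : Prop :=
  size T = s /\ valid_tab n T /\ C1 n T /\ C2 n T /\ C4 n T.

Definition aa (a : letter) : column := (a, barL a).

(* The three configurations (i), (ii), (iii), together with the result of
   deleting the m columns (a, \bar a).  T = p ++ (configuration) ++ q. *)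
Definition drop_config (T T' : tableau) (a : letter) (m : nat) : Prop :=
  exists p q : tableau,
    (* (i): left column (a,b1) present, right column (c1,d1) possibly absent *)
    (exists b1 : letter,
        b1 != barL a /\ (if q is cd :: _ then cd != aa a else true) /\
        T = p ++ (a, b1) :: nseq m (aa a) ++ q /\
        T' = p ++ (a, b1) :: q)
    \/
    (* (ii): left column (b2,c2) possibly absent, right column (d2, \bar a) present *)
    (exists d2 : letter,
        d2 != a /\ (if p is _ :: _ then last dflt_col p != aa a else true) /\
        T = p ++ nseq m (aa a) ++ (d2, barL a) :: q /\
        T' = p ++ (d2, barL a) :: q)
    \/
    (* (iii): both bounding columns possibly absent; keep one of the m+1 *)
    ((if p is _ :: _ then (last dflt_col p).1 != a else true) /\
     (if q is cd :: _ then cd.2 != barL a else true) /\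
     T = p ++ nseq m.+1 (aa a) ++ q /\
     T' = p ++ aa a :: q).

(* D_{2,s}(T) = T' (relational form of the drop map) *)
Definition DropRel (n s : nat) (T T' : tableau) : Prop :=
  (T = nseq s col11 /\ T' = [::])
  \/ (inB n s T /\ T' = T)
  \/ (~ inB n s T /\ T <> nseq s col11 /\
      exists (a : letter) (m : nat),
        valid_letter n a /\ (~~ a.2 || (a.1 == n)) /\ 1 <= m /\
        drop_config T T' a m).

(* Main.v *)
Require Import Defs.
From mathcomp Require Import all_boot.
From mathcomp Require Import zify.
From Stdlib Require Import Classical.
Set Implicit Arguments. Unset Strict Implicit. Unset Printing Implicit Defensive.

Lemma leL_trans n : transitive (leL n).
Proof.
move=> y x z Hxy Hyz.
case/orP: Hxy => [/eqP ->//|/andP[H1 H2]].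
case/orP: Hyz => [/eqP <-|/andP[H3 H4]]; first by rewrite /leL H1 H2 orbT.
move: H1 H2 H3 H4; case: x => i a; case: y => j b; case: z => k c; rewrite /leL /rk /= => H1 H2 H3 H4.
apply/orP; right; apply/andP; split.
  by apply: ltn_trans H3.
move: H1 H2 H3 H4; case: a; case: b; case: c => /=;
 case: (eqVneq i n) => [->|?]; case: (eqVneq j n) => [->|?];
 case: (eqVneq k n) => [->|?] //=; lia.
Qed.

Lemma leL_anti n x y : leL n x y -> leL n y x -> x = y.
Proof.
rewrite /leL; case/orP=> [/eqP//|/andP[H1 _]].
case/orP=> [/eqP//|/andP[H2 _]]. lia.
Qed.

Lemma barLK x : barL (barL x) = x.
Proof. by case: x => i b; rewrite /barL /= negbK. Qed.

Lemma barL_inj : injective barL.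
Proof. exact: (can_inj barLK). Qed.

Lemma leL_bar n x y : valid_letter n x -> valid_letter n y ->
  leL n x y -> leL n (barL x) (barL y) -> x = y.
Proof.
case: x => i a; case: y => j b; rewrite /valid_letter /leL /rk /barL /=.
move=> /andP[Hi Hi'] /andP[Hj Hj'].
case/orP=> [/eqP//|/andP[H1 _]].
case/orP=> [/eqP [-> E2]|/andP[H2 _]]; first by rewrite -(negbK a) E2 negbK.
move: H1 H2; case: a; case: b => /=; lia.
Qed.

Lemma leL_1 n y : valid_letter n y -> leL n y (1, false) -> y = (1, false).
Proof.
case: y => i a; rewrite /valid_letter /leL /rk /=.
move=> /andP[Hi Hi']; case/orP=> [/eqP//|/andP[H1 _]].
move: H1; case: a => /=; lia.
Qed.

Lemma leL_1b n y : valid_letter n y -> leL n (1, true) y -> y = (1, true).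
Proof.
case: y => i a; rewrite /valid_letter /leL /rk /=.
move=> /andP[Hi Hi']; case/orP=> [/eqP//|/andP[H1 _]].
move: H1; case: a => /=; lia.
Qed.

Lemma C2_letter n a : valid_letter n a -> ~~ leL n (barL a) a -> ~~ a.2 || (a.1 == n).
Proof.
case: a => i [] //=; rewrite /valid_letter /leL /rk /barL /= => /andP[Hi Hi'].
case: (eqVneq i n) => // Hin; rewrite /= andbT.
have -> : i < (n.*2).+1 - i by lia. by rewrite orbT.
Qed.

Definition Rc n : rel column := fun c d => leL n c.1 d.1 && leL n c.2 d.2.
Definition bad (c : column) : bool := c.2 == barL c.1.
Definition Qc : rel column := fun c d =>
  ~~ ((c.1 == d.1) && (d.2 == barL c.1)) && ~~ ((c.2 == d.2) && (c.2 == barL c.1)).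
Definition vcol n (c : column) := valid_letter n c.1 && valid_letter n c.2.

Lemma Rc_trans n : transitive (Rc n).
Proof.
move=> y x z /andP[H1 H2] /andP[H3 H4]; apply/andP; split;
  [exact: leL_trans H1 H3 | exact: leL_trans H2 H4].
Qed.

Lemma Rc_anti n c d : Rc n c d -> Rc n d c -> c = d.
Proof.
case: c => x y; case: d => z w /andP[/= H1 H2] /andP[/= H3 H4].
by rewrite (leL_anti H1 H3) (leL_anti H2 H4).
Qed.

Lemma C3E T : all (fun p : column * column =>
         ~~ ((p.1.1 == p.2.1) && (p.2.2 == barL p.1.1)) &&
         ~~ ((p.1.2 == p.2.2) && (p.1.2 == barL p.1.1)))
      (zip T (behead T)) = sorted Qc T.
Proof.
case: T => // x s /=; elim: s x => //= y s IH x; by rewrite IH.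
Qed.

Lemma nonbadQ c d : ~~ bad c -> ~~ bad d -> Qc c d.
Proof.
rewrite /bad /Qc => Hc Hd; apply/andP; split; apply/negP => /andP[/eqP E1 /eqP E2].
  by move: Hd; rewrite E2 -E1 eqxx.
by move: Hc; rewrite E2 eqxx.
Qed.

Lemma nobad_path x s : ~~ bad x -> all (predC bad) s -> path Qc x s.
Proof.
elim: s x => //= y s IH x Hx /andP[Hy Hs].
by rewrite nonbadQ // IH.
Qed.

Lemma nobad_sorted s : all (predC bad) s -> sorted Qc s.
Proof. case: s => //= x s /andP[Hx Hs]; exact: nobad_path. Qed.

Lemma sorted_ins p x q : all (predC bad) p -> all (predC bad) q ->
  (forall p0 l, p = rcons p0 l -> Qc l x) ->
  (forall h q0, q = h :: q0 -> Qc x h) -> sorted Qc (p ++ x :: q).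
Proof.
move=> Hp Hq Hl Hh.
have Hxq : path Qc x q.
  case: q Hq Hh => //= h q0 /andP[Hh0 Hq0] Hh.
  by rewrite (Hh h q0 erefl) nobad_path.
case: p Hp Hl => //= y p /andP[Hy Hp] Hl.
rewrite cat_path /= Hxq andbT (nobad_path Hy Hp) /=.
apply: (Hl (belast y p) (last y p)).
by rewrite lastI.
Qed.

Lemma pw_cat_mem (R : rel column) s1 s2 x y :
  pairwise R (s1 ++ s2) -> x \in s1 -> y \in s2 -> R x y.
Proof.
rewrite pairwise_cat => /and3P[H _ _] Hx Hy.
by move: H => /allrelP; apply.
Qed.

Lemma pw_cons_mem (R : rel column) x s y :
  pairwise R (x :: s) -> y \in s -> R x y.
Proof. by rewrite pairwise_cons => /andP[/allP H _] /H. Qed.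

Lemma pw_suffix (R : rel column) s1 s2 : pairwise R (s1 ++ s2) -> pairwise R s2.
Proof. by rewrite pairwise_cat => /and3P[]. Qed.

Lemma pw_cmp (R : rel column) s x y : pairwise R s -> x \in s -> y \in s ->
  [\/ x = y, R x y | R y x].
Proof.
elim: s => //= z s IH /andP[/allP Hz Hs].
rewrite !inE => /orP[/eqP->|Hx] /orP[/eqP->|Hy].
- by constructor 1.
- by constructor 2; apply: Hz.
- by constructor 3; apply: Hz.
- exact: IH.
Qed.

Lemma bad_eq n c d : vcol n c -> vcol n d -> bad c -> bad d -> Rc n c d -> c = d.
Proof.
case: c => x y; case: d => z w; rewrite /vcol /bad /Rc /=.
move=> /andP[Hx _] /andP[Hz _] /eqP-> /eqP-> /andP[H1 H2].
by rewrite (leL_bar Hx Hz H1 H2).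
Qed.

Lemma vmem n T c : valid_tab n T -> c \in T -> vcol n c.
Proof. by move=> /allP H /H. Qed.

Lemma bad_cmp n T c d : valid_tab n T -> pairwise (Rc n) T -> c \in T -> d \in T ->
  bad c -> bad d -> c = d.
Proof.
move=> HV HP Hc Hd Bc Bd.
have Vc := vmem HV Hc; have Vd := vmem HV Hd.
case: (pw_cmp HP Hc Hd) => [//|H|H].
  exact: bad_eq H.
by symmetry; apply: bad_eq H.
Qed.

Lemma aa_bad a : bad (aa a).
Proof. by rewrite /bad /aa. Qed.

Lemma bad_aa c : bad c -> c = aa c.1.
Proof. by case: c => x y; rewrite /bad /aa /= => /eqP->. Qed.

Lemma C4_del n u x w : C4 n (u ++ x ++ w) -> C4 n (u ++ w).
Proof.
move=> H j j' /andP[Hjj Hj'].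
pose f i := if i < size u then i else i + size x.
have Hn : forall i, nth dflt_col (u ++ w) i = nth dflt_col (u ++ x ++ w) (f i).
  move=> i; rewrite /f; case: ltnP => Hi; first by rewrite !nth_cat Hi.
  rewrite !nth_cat ltnNge Hi /=.
  have -> : i + size x < size u = false by apply/negbTE; rewrite -leqNgt; lia.
  have -> : i + size x - size u = (i - size u) + size x by lia.
  by rewrite ltnNge leq_addl /= addnK.
rewrite !Hn; apply: H.
move: Hj'; rewrite !size_cat /f => Hj'.
by apply/andP; split; case: (ltnP j' (size u)); case: (ltnP j (size u)); lia.
Qed.

Lemma del_pres n u x w :
  valid_tab n (u ++ x ++ w) -> C1 n (u ++ x ++ w) -> C2 n (u ++ x ++ w) ->
  C4 n (u ++ x ++ w) ->
  [/\ valid_tab n (u ++ w), C1 n (u ++ w), C2 n (u ++ w), C4 n (u ++ w)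
    & size (u ++ w) <= size (u ++ x ++ w)].
Proof.
move=> HV H1 H2 H4; split.
- by move: HV; rewrite /valid_tab !all_cat => /and3P[-> _ ->].
- apply: (subseq_sorted (@Rc_trans n) _ H1).
  by apply: cat_subseq; [exact: subseq_refl | exact: suffix_subseq].
- by move: H2; rewrite /C2 !all_cat => /and3P[-> _ ->].
- exact: C4_del H4.
- rewrite !size_cat; lia.
Qed.

Lemma notsorted_split (s : seq column) : ~~ sorted Qc s ->
  exists u c d w, s = u ++ c :: d :: w /\ ~~ Qc c d.
Proof.
case: s => //= x s; elim: s x => //= y s IH x.
case: (boolP (Qc x y)) => Hxy /=.
  move=> /IH [u [c [d [w [E H]]]]]; exists (x :: u), c, d, w; by rewrite E.
by move=> _; exists [::], x, y, s.
Qed.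

Lemma split_left (c : column) (u : seq column) : exists p k,
  u = p ++ nseq k c /\ (p = [::] \/ exists p0 l, p = rcons p0 l /\ l != c).
Proof.
elim/last_ind: u => [|u x [p [k [E H]]]].
  by exists [::], 0; split => //; left.
case: (eqVneq x c) => [->|Hx].
  exists p, k.+1; split => //.
  by rewrite E -cats1 -catA; congr (_ ++ _); rewrite cats1 -[in RHS]addn1 nseqD cats1.
exists (rcons u x), 0; split; first by rewrite cats0.
by right; exists u, x.
Qed.

Lemma split_right (c : column) (w : seq column) : exists k q,
  w = nseq k c ++ q /\ (q = [::] \/ exists h q0, q = h :: q0 /\ h != c).
Proof.
elim: w => [|x w [k [q [E H]]]].
  by exists 0, [::]; split => //; left.
case: (eqVneq x c) => [->|Hx].
  by exists k.+1, q; rewrite E.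
exists 0, (x :: w); split => //.
by right; exists x, w.
Qed.

Lemma blockL n T p q a : valid_tab n T -> pairwise (Rc n) T -> T = p ++ aa a :: q ->
  (p = [::] \/ exists p0 l, p = rcons p0 l /\ l.1 != a) ->
  (q = [::] \/ exists h q0, q = h :: q0 /\ h.2 != barL a) ->
  [/\ all (predC bad) p, all (predC bad) q, C3 T & (a = (1, false) -> p = [::] /\ q = [::])].
Proof.
move=> HV HP E Hp Hq.
have Haa : aa a \in T by rewrite E mem_cat inE eqxx orbT.
have Hbad : forall c, c \in T -> bad c -> c = aa a.
  by move=> c Hc Bc; apply: (bad_cmp HV HP Hc Haa Bc (aa_bad a)).
have Hl : forall p0 l, p = rcons p0 l -> l.1 != a -> [/\ Rc n l (aa a),
     aa a \notin p & Qc l (aa a)].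
  move=> p0 l Ep Hl.
  have E2 : T = p0 ++ l :: aa a :: q by rewrite E Ep cat_rcons.
  have R1 : Rc n l (aa a).
    by apply: (pw_cons_mem (s := aa a :: q)); [apply: (@pw_suffix _ p0); rewrite -E2 | rewrite inE eqxx].
  split => //.
    rewrite Ep mem_rcons inE; apply/negP => /orP[/eqP El|Hin].
      by move: Hl; rewrite -El eqxx.
    have R2 : Rc n (aa a) l by apply: (pw_cat_mem (s1 := p0) (s2 := l :: aa a :: q)); [rewrite -E2 | | rewrite inE eqxx].
    by move: Hl; rewrite (Rc_anti R1 R2) eqxx.
  rewrite /Qc; apply/andP; split; apply/negP => /andP[/eqP E3 /eqP E4].
    by move: Hl; rewrite E3 eqxx.
  by move: Hl; rewrite (barL_inj (etrans (esym E4) E3)) eqxx.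
have Hh : forall h q0, q = h :: q0 -> h.2 != barL a -> [/\ Rc n (aa a) h,
     aa a \notin q & Qc (aa a) h].
  move=> h q0 Eq Hh.
  have E2 : T = p ++ aa a :: h :: q0 by rewrite E Eq.
  have P2 : pairwise (Rc n) (aa a :: h :: q0) by apply: (@pw_suffix _ p); rewrite -E2.
  have R1 : Rc n (aa a) h by apply: (pw_cons_mem P2); rewrite inE eqxx.
  split => //.
    rewrite Eq inE; apply/negP => /orP[/eqP El|Hin].
      by move: Hh; rewrite -El /= eqxx.
    have R2 : Rc n h (aa a).
      by move: P2; rewrite pairwise_cons => /andP[_ P3]; apply: (pw_cons_mem P3).
    by move: Hh; rewrite -(Rc_anti R1 R2) /= eqxx.
  rewrite /Qc; apply/andP; split; apply/negP => /andP[/eqP E3 /eqP E4].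
    by move: Hh; rewrite E4 eqxx.
  by move: Hh; rewrite -E3 eqxx.
have NBp : all (predC bad) p.
  apply/allP => c Hc; apply/negP => Bc.
  have Ec : c = aa a by apply: Hbad => //; rewrite E mem_cat Hc.
  case: Hp => [Ep|[p0 [l [Ep Hl0]]]]; first by move: Hc; rewrite Ep.
  case: (Hl p0 l Ep Hl0) => _ /negP; by rewrite -Ec.
have NBq : all (predC bad) q.
  apply/allP => c Hc; apply/negP => Bc.
  have Ec : c = aa a by apply: Hbad => //; rewrite E mem_cat inE Hc !orbT.
  case: Hq => [Eq|[h [q0 [Eq Hh0]]]]; first by move: Hc; rewrite Eq.
  case: (Hh h q0 Eq Hh0) => _ /negP; by rewrite -Ec.
split => //.
- rewrite /C3 C3E E; apply: sorted_ins => //.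
    move=> p1 l1 Ep1.
    case: Hp => [Ep|[p0 [l [Ep Hl0]]]]; first by move: Ep1; rewrite Ep; case: p1.
    have El : l = l1 by have := congr1 (last dflt_col) (etrans (esym Ep) Ep1); rewrite !last_rcons.
    by case: (Hl p0 l Ep Hl0); rewrite El.
  move=> h1 q1 Eq1.
  case: Hq => [Eq|[h [q0 [Eq Hh0]]]]; first by move: Eq1; rewrite Eq.
  have Eh : h = h1 by move: Eq1; rewrite Eq => -[].
  by case: (Hh h q0 Eq Hh0); rewrite Eh.
- move=> Ea; split.
    case: Hp => [//|[p0 [l [Ep Hl0]]]].
    case: (Hl p0 l Ep Hl0) => R1 _ _.
    have Vl : vcol n l by apply: (vmem HV); rewrite E Ep mem_cat mem_rcons inE eqxx.
    move: R1 => /andP[R1 _]; move: Vl => /andP[Vl _].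
    by move: Hl0; rewrite Ea (leL_1 Vl) ?eqxx //; rewrite Ea in R1.
  case: Hq => [//|[h [q0 [Eq Hh0]]]].
  case: (Hh h q0 Eq Hh0) => R1 _ _.
  have Vh : vcol n h by apply: (vmem HV); rewrite E Eq mem_cat !inE eqxx !orbT.
  move: R1 => /andP[_ R1]; move: Vh => /andP[_ Vh].
  by move: Hh0; rewrite Ea (leL_1b Vh) ?eqxx //; rewrite Ea in R1.
Qed.

Lemma ifp_conv (P : column -> bool) p :
  (match p with [::] => is_true true | _ :: _ => is_true (P (last dflt_col p)) end) ->
  p = [::] \/ exists p0 l, p = rcons p0 l /\ P l.
Proof.
case/lastP: p => [|p0 l]; first by left.
move=> H; right; exists p0, l; split => //; move: H.
by case: p0 => [|y ys] //=; rewrite last_rcons.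
Qed.

Lemma ifp_back (P : column -> bool) p p0 l : p = rcons p0 l -> P l ->
  (match p with [::] => is_true true | _ :: _ => is_true (P (last dflt_col p)) end).
Proof. by move=> ->; case: p0 => [|y ys] //=; rewrite last_rcons. Qed.

Lemma ifq_conv (P : column -> bool) q :
  (match q with [::] => is_true true | cd :: _ => is_true (P cd) end) ->
  q = [::] \/ exists h q0, q = h :: q0 /\ P h.
Proof. case: q => [|h q0] H; [by left | by right; exists h, q0]. Qed.

Lemma nb_C35 T : all (predC bad) T -> C3 T /\ C5 T.
Proof.
move=> H; split; first by rewrite /C3 C3E; apply: nobad_sorted.
apply/allP => c Hc; apply/negP => /eqP Ec.
by move/allP: H => /(_ c Hc); rewrite Ec.
Qed.

Lemma inB0 n : inB n 0 [::].
Proof. do 6 (split => //). by move=> j j' /andP[_ ]. Qed.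

Lemma C1pw n T : C1 n T -> pairwise (Rc n) T.
Proof. by move=> H; rewrite -(sorted_pairwise (@Rc_trans n)). Qed.

Lemma part2 n s T T' : inTcal n s T -> DropRel n s T T' -> exists k, k <= s /\ inB n k T'.
Proof.
case=> [Hs [HV [H1 [H2 H4]]]].
case=> [[ET ->]|[[HB ->]|[HnB [Hne [a [m [Va [Ha [Hm [p [q Hc]]]]]]]]]]].
- by exists 0; split => //; exact: inB0.
- by exists s.
have HP := C1pw H1.
case: Hc => [[b1 [Hb1 [Hq [ET ET']]]]|[[d2 [Hd2 [Hp [ET ET']]]]|[Hp [Hq [ET ET']]]]].
-
  have ET2 : T = rcons p (a, b1) ++ nseq m (aa a) ++ q by rewrite ET cat_rcons.
  have ET2' : T' = rcons p (a, b1) ++ q by rewrite ET' cat_rcons.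
  have := @del_pres n (rcons p (a, b1)) (nseq m (aa a)) q.
  rewrite -ET2 -ET2' => /(_ HV H1 H2 H4) [HV' H1' H2' H4' Hsz].
  have HaaT : aa a \in T by rewrite ET mem_cat inE mem_cat mem_nseq Hm eqxx !orbT.
  have NB : all (predC bad) T'.
    apply/allP => c Hc; apply/negP => Bc.
    have HcT : c \in T.
      move: Hc; rewrite ET ET' !mem_cat !inE mem_cat.
      by case/or3P => ->; rewrite ?orbT.
    have Ec := bad_cmp HV HP HcT HaaT Bc (aa_bad a).
    move: Hc; rewrite Ec ET' mem_cat inE; case/or3P.
    + move=> Hin.
      have R1 : Rc n (aa a) (a, b1).
        apply: (pw_cat_mem (s1 := p) (s2 := (a, b1) :: nseq m (aa a) ++ q)) => //.
          by rewrite -ET. by rewrite inE eqxx.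
      have R2 : Rc n (a, b1) (aa a).
        apply: (pw_cons_mem (s := nseq m (aa a) ++ q)).
          by apply: (@pw_suffix _ p); rewrite -ET.
        by rewrite mem_cat mem_nseq Hm eqxx.
      by case: (Rc_anti R1 R2) => E; move: Hb1; rewrite E eqxx.
    + by move/eqP => [E]; move: Hb1; rewrite E eqxx.
    + case: q Hq ET ET' ET2 ET2' => [//|h q0] Hq ET ET' _ _.
      rewrite inE => /orP[/eqP Eh|Hin]; first by move: Hq; rewrite Eh eqxx.
      have R1 : Rc n (aa a) h.
        apply: (pw_cat_mem (s1 := p ++ (a, b1) :: nseq m (aa a)) (s2 := h :: q0)).
          by rewrite -catA -ET.
          by rewrite mem_cat inE mem_nseq Hm eqxx !orbT.
        by rewrite inE eqxx.
      have R2 : Rc n h (aa a).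
        apply: (pw_cons_mem (s := q0)) => //.
        by apply: (@pw_suffix _ (p ++ (a, b1) :: nseq m (aa a))); rewrite -catA -ET.
      by move: Hq; rewrite (Rc_anti R1 R2) eqxx.
  case: (nb_C35 NB) => H3' H5'.
  exists (size T'); split; first by rewrite -Hs.
  by do 6 (split => //).
-
  have := @del_pres n p (nseq m (aa a)) ((d2, barL a) :: q).
  rewrite -ET -ET' => /(_ HV H1 H2 H4) [HV' H1' H2' H4' Hsz].
  have HaaT : aa a \in T by rewrite ET mem_cat mem_cat mem_nseq Hm eqxx !orbT.
  have NB : all (predC bad) T'.
    apply/allP => c Hc; apply/negP => Bc.
    have HcT : c \in T.
      move: Hc; rewrite ET ET' !mem_cat !inE.
      by case/or3P => ->; rewrite ?orbT.
    have Ec := bad_cmp HV HP HcT HaaT Bc (aa_bad a).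
    move: Hc; rewrite Ec ET' mem_cat inE; case/or3P.
    + case/lastP: p Hp ET ET' => [//|p0 l] Hp ET ET'.
      have Hl : l != aa a by move: Hp; case: p0 {ET ET'} => [|y ys] //=; rewrite last_rcons.
      rewrite mem_rcons inE => /orP[/eqP El|Hin]; first by move: Hl; rewrite El eqxx.
      have R1 : Rc n (aa a) l.
        apply: (pw_cat_mem (s1 := p0) (s2 := l :: nseq m (aa a) ++ (d2, barL a) :: q)) => //.
          by rewrite -cat_rcons -ET. by rewrite inE eqxx.
      have R2 : Rc n l (aa a).
        apply: (pw_cons_mem (s := nseq m (aa a) ++ (d2, barL a) :: q)).
          by apply: (@pw_suffix _ p0); rewrite -cat_rcons -ET.
        by rewrite mem_cat mem_nseq Hm eqxx.
      by move: Hl; rewrite (Rc_anti R2 R1) eqxx.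
    + by move/eqP => [E]; move: Hd2; rewrite E eqxx.
    + move=> Hin.
      have R1 : Rc n (aa a) (d2, barL a).
        apply: (pw_cat_mem (s1 := p ++ nseq m (aa a)) (s2 := (d2, barL a) :: q)).
          by rewrite -catA -ET.
          by rewrite mem_cat mem_nseq Hm eqxx orbT.
        by rewrite inE eqxx.
      have R2 : Rc n (d2, barL a) (aa a).
        apply: (pw_cons_mem (s := q)) => //.
        by apply: (@pw_suffix _ (p ++ nseq m (aa a))); rewrite -catA -ET.
      by case: (Rc_anti R1 R2) => E; move: Hd2; rewrite -E eqxx.
  case: (nb_C35 NB) => H3' H5'.
  exists (size T'); split; first by rewrite -Hs.
  by do 6 (split => //).
-
  have ET2 : T = rcons p (aa a) ++ nseq m (aa a) ++ q by rewrite ET cat_rcons.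
  have ET2' : T' = rcons p (aa a) ++ q by rewrite ET' cat_rcons.
  have := @del_pres n (rcons p (aa a)) (nseq m (aa a)) q.
  rewrite -ET2 -ET2' => /(_ HV H1 H2 H4) [HV' H1' H2' H4' Hsz].
  have Hp' := @ifp_conv (fun l => l.1 != a) p Hp.
  have Hq' := @ifq_conv (fun h => h.2 != barL a) q Hq.
  case: (blockL HV' (C1pw H1') ET' Hp' Hq') => NBp NBq H3' Ha1.
  have H5' : C5 T'.
    apply/allP => c Hc; apply/negP => /eqP Ec; move: Hc; rewrite Ec ET' mem_cat inE.
    case/or3P.
    + by move/allP: NBp => H /H.
    + move/eqP => Ecol; have Ea : a = (1, false) by rewrite [a]/(aa a).1 -Ecol.
      case: (Ha1 Ea) => Ep0 Eq0; apply: Hne.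
      by rewrite ET Ep0 Eq0 cats0 /= -Ecol -Hs ET Ep0 Eq0 cats0 size_nseq.
    + by move/allP: NBq => H /H.
  exists (size T'); split; first by rewrite -Hs.
  by do 6 (split => //).
Qed.

Lemma part1 n s T : inTcal n s T -> exists T', DropRel n s T T'.
Proof.
move=> HT; case: (HT) => [Hs [HV [H1 [H2 H4]]]].
case: (classic (T = nseq s col11)) => [E|Hne]; first by exists [::]; left.
case: (classic (inB n s T)) => [HB|HnB]; first by exists T; right; left.
have HP := C1pw H1.
have [c [HcT Bc]] : exists c, c \in T /\ bad c.
  case: (boolP (all (fun c => c != col11) T)) => H5.
    case: (boolP (sorted Qc T)) => H3.
      by exfalso; apply: HnB; do 4 (split => //); rewrite /C3 C3E.
    case: (notsorted_split H3) => u [c [d [w [E HQ]]]].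
    case: (boolP (bad c)) => Bc.
      by exists c; rewrite E mem_cat inE eqxx orbT.
    case: (boolP (bad d)) => Bd.
      by exists d; rewrite E mem_cat !inE eqxx !orbT.
    by rewrite nonbadQ in HQ.
  case/allPn: H5 => c Hc; rewrite negbK => /eqP Ec.
  by exists c; rewrite Ec in Hc *.
set a := c.1.
have Ec := bad_aa Bc.
have Va : valid_letter n a by case/andP: (vmem HV HcT).
have Ha : ~~ a.2 || (a.1 == n).
  apply: C2_letter => //; move/allP: H2 => /(_ c HcT).
  by rewrite {1}Ec.
have [u [w ET]] : exists u w, T = u ++ c :: w.
  by case/splitPr: HcT => u w; exists u, w.
case: (split_left (aa a) u) => p [k1 [Eu Hp]].
case: (split_right (aa a) w) => k2 [q [Ew Hq]].
have ET' : T = p ++ nseq (k1 + k2).+1 (aa a) ++ q.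
  rewrite ET Eu Ew {1}Ec -addnS nseqD -!catA /=. by [].
have Hpc : match p return Prop with [::] => is_true true | _ :: _ => is_true (last dflt_col p != aa a) end.
  by case: Hp => [->//|[p0 [l [Ep Hl]]]]; apply: (@ifp_back (fun x => x != aa a) _ p0 l).
have Hqc : match q return Prop with [::] => is_true true | cd :: _ => is_true (cd != aa a) end.
  by case: Hq => [->//|[h [q0 [-> Hh]]]].
have Hpx : (exists p0 l, p = rcons p0 l /\ l = (a, l.2) /\ l.2 != barL a) \/
           (p = [::] \/ exists p0 l, p = rcons p0 l /\ l.1 != a).
  case: Hp => [->|[p0 [l [Ep Hl]]]]; first by right; left.
  case: (eqVneq l.1 a) => El; last by right; right; exists p0, l.
  left; exists p0, l; split => //; split; first by rewrite -El; case: l {Ep Hl El}.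
  apply/eqP => E2; move: Hl; rewrite /aa -E2 -El; by case: l {Ep El E2} => ? ? /=; rewrite eqxx.
have Hqx : (exists h q0, q = h :: q0 /\ h = (h.1, barL a) /\ h.1 != a) \/
           (q = [::] \/ exists h q0, q = h :: q0 /\ h.2 != barL a).
  case: Hq => [->|[h [q0 [Eq Hh]]]]; first by right; left.
  case: (eqVneq h.2 (barL a)) => Eh; last by right; right; exists h, q0.
  left; exists h, q0; split => //; split; first by rewrite -Eh; case: h {Eq Hh Eh}.
  apply/eqP => E1; move: Hh; rewrite /aa -Eh -E1; by case: h {Eq E1 Eh} => ? ? /=; rewrite eqxx.
case: Hpx => [[p0 [l [Ep [El Hl2]]]] | Hp'].
  exists (p0 ++ (a, l.2) :: q); right; right; split => //; split => //.
  exists a, (k1 + k2).+1; do 3 (split => //).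
  exists p0, q; left; exists l.2; do 2 (split => //).
  by split => //; rewrite ET' Ep cat_rcons -El.
case: Hqx => [[h [q0 [Eq [Eh Hh1]]]] | Hq'].
  exists (p ++ (h.1, barL a) :: q0); right; right; split => //; split => //.
  exists a, (k1 + k2).+1; do 3 (split => //).
  exists p, q0; right; left; exists h.1; do 2 (split => //).
  by split => //; rewrite ET' Eq -Eh.
case Ek: (k1 + k2) ET' => [|m] ET'.
  exfalso.
  have ET1 : T = p ++ aa a :: q by rewrite ET'.
  case: (blockL HV HP ET1 Hp' Hq') => NBp NBq H3 Ha1.
  have H5 : C5 T.
    apply/allP => d Hd; apply/negP => /eqP Ed; move: Hd; rewrite Ed ET1 mem_cat inE.
    case/or3P.
    + by move/allP: NBp => H /H.
    + move/eqP => Ecol; have Ea : a = (1, false) by rewrite [a]/(aa a).1 -Ecol.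
      case: (Ha1 Ea) => Ep0 Eq0; apply: Hne.
      by rewrite -Hs ET1 Ep0 Eq0 /= -Ecol.
    + by move/allP: NBq => H /H.
  by apply: HnB; do 6 (split => //).
exists (p ++ aa a :: q); right; right; split => //; split => //.
exists a, m.+1; do 3 (split => //).
exists p, q; right; right; split.
  by case: Hp' => [->//|[p0 [l [Ep Hl]]]]; apply: (@ifp_back (fun x => x.1 != a) _ p0 l).
split; first by case: Hq' => [->//|[h [q0 [-> Hh]]]].
by split.
Qed.

Theorem theorem4p2 (n s : nat) (T : tableau) :
  4 <= n -> 1 <= s -> inTcal n s T ->
  (exists T' : tableau, DropRel n s T T') /\
  (forall T' : tableau, DropRel n s T T' -> exists k, k <= s /\ inB n k T').
Proof.
move=> _ _ HT; split; first exact: part1.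
by move=> T'; apply: part2.
Qed.
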